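(* Let $\mathcal{P}$ be a process LTS and $\mathcal{E}$ an environment LTS over the same action set $A$. (i) $\sim_e\ \subseteq\ \sim^{ji}_e$ for every environment $e$. (ii) If $A$ contains two distinct actions $a,b$ and there are states $x,y$ occurring both as processes and as environments with (up to isomorphism of reachable parts) $y$ having exactly the transitions $y\xrightarrow{a}y_1\xrightarrow{b}y_2$, and $x$ having exactly the transitions $x\xrightarrow{a}x_1\xrightarrow{b}x_2$ and $x\xrightarrow{a}x_3$, where $x_2,x_3,y_2$ have no transitions (i.e. $y=a.b$ and $x=a.b+a$), then there is an environment $e$ with $\sim_e\ \subsetneq\ \sim^{ji}_e$ (namely $e=x$, with $y\sim^{ji}_e x$ but not $y\sim_e x$). (iii) $\sim^{ji}_e\ \subseteq\ \simeq^{ji}_e$ for every environment $e$. (iv) Under the same proviso as in (ii), there is an environment $g$ with $\sim^{ji}_g\ \subsetneq\ \simeq^{ji}_g$ (namely $g=y$, with $y\simeq^{ji}_g x$ but not $y\sim^{ji}_g x$).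
   Context: A labeled transition system (LTS) is a triple $\langle \mathrm{St},A,\to\rangle$ with states, actions, and transitions $s\xrightarrow{a}t$. A process LTS $\mathcal{P}=\langle \mathrm{Pr},A,\to\rangle$ has states called processes; an environment LTS $\mathcal{E}=\langle\mathrm{Env},A,\Rightarrow\rangle$ has states called environments, transitions $e\xRightarrow{a}e'$. A simulation is a nonempty relation $S$ on states such that $s\,S\,t$ and $s\xrightarrow{a}s'$ imply some $t\xrightarrow{a}t'$ with $s'\,S\,t'$; a bisimulation is a relation $B$ such that $B$ and its converse are simulations; $\le$ and $\sim$ denote simulatability and bisimilarity (existence of a simulation, resp. bisimulation, relating the states). An $\mathcal{E}$-parameterized bisimulation is a family $(B_f)_{f\in\mathrm{Env}}$ of nonempty relations on $\mathrm{Pr}$ such that whenever $p\,B_e\,q$ and $e\xRightarrow{a}e'$: every $p\xrightarrow{a}p'$ is matched by some $q\xrightarrow{a}q'$ with $p'\,B_{e'}\,q'$, and every $q\xrightarrow{a}q'$ by some $p\xrightarrow{a}p'$ with $p'\,B_{e'}\,q'$. $p\sim_e q$ iff some such family has $p\,B_e\,q$. The join LTS $\mathcal{P}\mathbin{\&}\mathcal{E}$ has states $p\mathbin{\&}e$ and transitions $p\mathbin{\&}e\xrightarrow{a}p'\mathbin{\&}e'$ iff $p\xrightarrow{a}p'$ and $e\xRightarrow{a}e'$. $p\le^{ji}_e q$ iff $p\mathbin{\&}e\le q\mathbin{\&}e$; $p\sim^{ji}_e q$ iff $p\mathbin{\&}e\sim q\mathbin{\&}e$; $p\simeq^{ji}_e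 q$ iff $p\le^{ji}_e q$ and $q\le^{ji}_e p$. *)

(* Defs.v *)
Set Implicit Arguments.

Definition simulation {St A : Type} (tr : St -> A -> St -> Prop)
  (S : St -> St -> Prop) : Prop :=
  (exists s t, S s t) /\
  forall s t a s', S s t -> tr s a s' -> exists t', tr t a t' /\ S s' t'.

Definition bisimulation {St A : Type} (tr : St -> A -> St -> Prop)
  (B : St -> St -> Prop) : Prop :=
  simulation tr B /\ simulation tr (fun s t => B t s).

Definition simulates {St A : Type} (tr : St -> A -> St -> Prop) (s t : St) : Prop :=
  exists S, simulation tr S /\ S s t.

Definition bisimilar {St A : Type} (tr : St -> A -> St -> Prop) (s t : St) : Prop :=
  exists B, bisimulation tr B /\ B s t.

Definition param_bisimulation {Pr Env A : Type}
  (trP : Pr -> A -> Pr -> Prop) (trE : Env -> A -> Env -> Prop)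
  (B : Env -> Pr -> Pr -> Prop) : Prop :=
  (forall f, exists p q, B f p q) /\
  forall e p q a e', B e p q -> trE e a e' ->
    (forall p', trP p a p' -> exists q', trP q a q' /\ B e' p' q') /\
    (forall q', trP q a q' -> exists p', trP p a p' /\ B e' p' q').

Definition param_bisim {Pr Env A : Type}
  (trP : Pr -> A -> Pr -> Prop) (trE : Env -> A -> Env -> Prop)
  (e : Env) (p q : Pr) : Prop :=
  exists B, param_bisimulation trP trE B /\ B e p q.

Definition join_tr {Pr Env A : Type}
  (trP : Pr -> A -> Pr -> Prop) (trE : Env -> A -> Env -> Prop)
  (s : Pr * Env) (a : A) (t : Pr * Env) : Prop :=
  trP (fst s) a (fst t) /\ trE (snd s) a (snd t).

Definition ji_sim {Pr Env A : Type}
  (trP : Pr -> A -> Pr -> Prop) (trE : Env -> A -> Env -> Prop)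
  (e : Env) (p q : Pr) : Prop :=
  simulates (join_tr trP trE) (p, e) (q, e).

Definition ji_bisim {Pr Env A : Type}
  (trP : Pr -> A -> Pr -> Prop) (trE : Env -> A -> Env -> Prop)
  (e : Env) (p q : Pr) : Prop :=
  bisimilar (join_tr trP trE) (p, e) (q, e).

Definition ji_simeq {Pr Env A : Type}
  (trP : Pr -> A -> Pr -> Prop) (trE : Env -> A -> Env -> Prop)
  (e : Env) (p q : Pr) : Prop :=
  ji_sim trP trE e p q /\ ji_sim trP trE e q p.

Definition dead {St A : Type} (tr : St -> A -> St -> Prop) (s : St) : Prop :=
  forall c s', ~ tr s c s'.

Definition is_ab {St A : Type} (tr : St -> A -> St -> Prop) (a b : A) (s : St) : Prop :=
  exists s1 s2,
    (forall c t, tr s c t <-> (c = a /\ t = s1)) /\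
    (forall c t, tr s1 c t <-> (c = b /\ t = s2)) /\
    dead tr s2.

Definition is_ab_plus_a {St A : Type} (tr : St -> A -> St -> Prop) (a b : A) (s : St) : Prop :=
  exists s1 s2 s3,
    (forall c t, tr s c t <-> ((c = a /\ t = s1) \/ (c = a /\ t = s3))) /\
    (forall c t, tr s1 c t <-> (c = b /\ t = s2)) /\
    dead tr s2 /\ dead tr s3.

(* Main.v *)
Require Import Defs.

Section S.
Context (A Pr Env : Type) (trP : Pr -> A -> Pr -> Prop) (trE : Env -> A -> Env -> Prop).
Notation J := (join_tr trP trE).

Lemma deadP p e : dead trP p -> dead J (p, e).
Proof. intros H c [p' e'] [H1 _]; cbn in *; eapply H; eauto. Qed.
Lemma deadE p e : dead trE e -> dead J (p, e).
Proof. intros H c [p' e'] [_ H1]; cbn in *; eapply H; eauto. Qed.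

Lemma part_i e p q : param_bisim trP trE e p q -> ji_bisim trP trE e p q.
Proof.
  intros [B [[_ HB] Hb]].
  exists (fun s t => snd s = snd t /\ B (snd s) (fst s) (fst t)).
  split; [split; [split|split]|cbn; auto].
  - exists (p, e), (q, e); cbn; auto.
  - intros [s1 s2] [t1 t2] c [s1' s2'] [Heq HBs] [Ht1 Ht2]; cbn in *. subst t2.
    destruct (HB _ _ _ _ _ HBs Ht2) as [Hf _].
    destruct (Hf _ Ht1) as [q' [Hq' HB']].
    exists (q', s2'); repeat split; cbn; auto.
  - exists (q, e), (p, e); cbn; auto.
  - intros [s1 s2] [t1 t2] c [s1' s2'] [Heq HBs] [Ht1 Ht2]; cbn in *. subst t2.
    destruct (HB _ _ _ _ _ HBs Ht2) as [_ Hg].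
    destruct (Hg _ Ht1) as [q' [Hq' HB']].
    exists (q', s2'); repeat split; cbn; auto.
Qed.

Lemma part_iii e p q : ji_bisim trP trE e p q -> ji_simeq trP trE e p q.
Proof.
  intros [B [[H1 H2] HB]]. split.
  - exists B; auto.
  - exists (fun s t => B t s); auto.
Qed.

Lemma ii_bisim a b xP yP xE :
  is_ab trP a b yP -> is_ab_plus_a trP a b xP -> is_ab_plus_a trE a b xE ->
  ji_bisim trP trE xE yP xP.
Proof.
  intros [y1 [y2 [Hy0 [Hy1 Hy2]]]] [x1 [x2 [x3 [Hx0 [Hx1 [Hx2 Hx3]]]]]]
         [e1 [e2 [e3 [He0 [He1 [He2 He3]]]]]].
  exists (fun s t => (s = (yP, xE) /\ t = (xP, xE)) \/ (s = (y1, e1) /\ t = (x1, e1))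
                     \/ (dead J s /\ dead J t)).
  split; [split; [split|split]|auto].
  - exists (yP, xE), (xP, xE); auto.
  - intros s t c [p' e'] HR Htr.
    destruct HR as [[-> ->]|[[-> ->]|[Hs Ht]]].
    + destruct Htr as [H1 H2]; cbn in *.
      apply Hy0 in H1 as [-> ->]. apply He0 in H2 as [[_ ->]|[_ ->]].
      * exists (x1, e1); split; [split; cbn; [apply Hx0|apply He0]; left; auto|].
        right; left; auto.
      * exists (x1, e3); split; [split; cbn; [apply Hx0|apply He0]; auto|].
        right; right; split; apply deadE; auto.
    + destruct Htr as [H1 H2]; cbn in *.
      apply Hy1 in H1 as [-> ->]. apply He1 in H2 as [_ ->].
      exists (x2, e2); split; [split; cbn; [apply Hx1|apply He1]; auto|].
      right; right; split; apply deadP; auto.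
    + exfalso; eapply Hs; eauto.
  - exists (xP, xE), (yP, xE); auto.
  - intros s t c [p' e'] HR Htr.
    destruct HR as [[-> ->]|[[-> ->]|[Hs Ht]]].
    + destruct Htr as [H1 H2]; cbn in *.
      apply He0 in H2 as [[-> ->]|[-> ->]].
      * apply Hx0 in H1 as [[_ ->]|[_ ->]].
        -- exists (y1, e1); split; [split; cbn; [apply Hy0|apply He0]; auto|].
           right; left; auto.
        -- exists (y1, e3); split; [split; cbn; [apply Hy0|apply He0]; auto|].
           right; right; split; [apply deadE|apply deadP]; auto.
      * exists (y1, e3); split; [split; cbn; [apply Hy0|apply He0]; auto|].
        right; right; split; apply deadE; auto.
    + destruct Htr as [H1 H2]; cbn in *.
      apply Hx1 in H1 as [-> ->]. apply He1 in H2 as [_ ->].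
      exists (y2, e2); split; [split; cbn; [apply Hy1|apply He1]; auto|].
      right; right; split; apply deadP; auto.
    + exfalso; eapply Ht; eauto.
Qed.

Lemma ii_not a b xP yP xE :
  is_ab trP a b yP -> is_ab_plus_a trP a b xP -> is_ab_plus_a trE a b xE ->
  ~ param_bisim trP trE xE yP xP.
Proof.
  intros [y1 [y2 [Hy0 [Hy1 Hy2]]]] [x1 [x2 [x3 [Hx0 [Hx1 [Hx2 Hx3]]]]]]
         [e1 [e2 [e3 [He0 [He1 [He2 He3]]]]]] [B [[_ HB] H0]].
  destruct (HB xE yP xP a e1 H0 (proj2 (He0 _ _) (or_introl (conj eq_refl eq_refl))))
    as [_ Hg].
  destruct (Hg x3 (proj2 (Hx0 _ _) (or_intror (conj eq_refl eq_refl)))) as [p' [Hp HB1]].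
  apply Hy0 in Hp as [_ ->].
  destruct (HB e1 y1 x3 b e2 HB1 (proj2 (He1 _ _) (conj eq_refl eq_refl))) as [Hf _].
  destruct (Hf y2 (proj2 (Hy1 _ _) (conj eq_refl eq_refl))) as [q' [Hq _]].
  eapply Hx3; eauto.
Qed.

Lemma iv_sim a b xP yP yE :
  is_ab trP a b yP -> is_ab_plus_a trP a b xP -> is_ab trE a b yE ->
  ji_simeq trP trE yE yP xP.
Proof.
  intros [y1 [y2 [Hy0 [Hy1 Hy2]]]] [x1 [x2 [x3 [Hx0 [Hx1 [Hx2 Hx3]]]]]]
         [e1 [e2 [He0 [He1 He2]]]].
  split.
  - exists (fun s t => (s = (yP, yE) /\ t = (xP, yE)) \/ (s = (y1, e1) /\ t = (x1, e1))
                     \/ dead J s).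
    split; [split|auto].
    + exists (yP, yE), (xP, yE); auto.
    + intros s t c [p' e'] HR Htr.
      destruct HR as [[-> ->]|[[-> ->]|Hs]].
      * destruct Htr as [H1 H2]; cbn in *.
        apply Hy0 in H1 as [-> ->]. apply He0 in H2 as [_ ->].
        exists (x1, e1); split; [split; cbn; [apply Hx0|apply He0]; auto|].
        right; left; auto.
      * destruct Htr as [H1 H2]; cbn in *.
        apply Hy1 in H1 as [-> ->]. apply He1 in H2 as [_ ->].
        exists (x2, e2); split; [split; cbn; [apply Hx1|apply He1]; auto|].
        right; right; apply deadP; auto.
      * exfalso; eapply Hs; eauto.
  - exists (fun s t => (s = (xP, yE) /\ t = (yP, yE)) \/ (s = (x1, e1) /\ t = (y1, e1))
                     \/ dead J s).
    split; [split|auto].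
    + exists (xP, yE), (yP, yE); auto.
    + intros s t c [p' e'] HR Htr.
      destruct HR as [[-> ->]|[[-> ->]|Hs]].
      * destruct Htr as [H1 H2]; cbn in *.
        apply He0 in H2 as [-> ->].
        exists (y1, e1); split; [split; cbn; [apply Hy0|apply He0]; auto|].
        apply Hx0 in H1 as [[_ ->]|[_ ->]]; [right; left; auto|right; right; apply deadP; auto].
      * destruct Htr as [H1 H2]; cbn in *.
        apply Hx1 in H1 as [-> ->]. apply He1 in H2 as [_ ->].
        exists (y2, e2); split; [split; cbn; [apply Hy1|apply He1]; auto|].
        right; right; apply deadP; auto.
      * exfalso; eapply Hs; eauto.
Qed.

Lemma iv_not a b xP yP yE :
  is_ab trP a b yP -> is_ab_plus_a trP a b xP -> is_ab trE a b yE ->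
  ~ ji_bisim trP trE yE yP xP.
Proof.
  intros [y1 [y2 [Hy0 [Hy1 Hy2]]]] [x1 [x2 [x3 [Hx0 [Hx1 [Hx2 Hx3]]]]]]
         [e1 [e2 [He0 [He1 He2]]]] [B [[[_ Hf] [_ Hg]] H0]].
  destruct (Hg (xP, yE) (yP, yE) a (x3, e1) H0) as [[p e] [[H1 H2] HB1]].
  { split; cbn; [apply Hx0; right|apply He0]; auto. }
  cbn in *. apply Hy0 in H1 as [_ ->]. apply He0 in H2 as [_ ->].
  destruct (Hf (y1, e1) (x3, e1) b (y2, e2) HB1) as [[q e'] [[H3 _] _]].
  { split; cbn; [apply Hy1|apply He1]; auto. }
  cbn in *. eapply Hx3; eauto.
Qed.
End S.

Theorem proposition3p7 (A Pr Env : Type)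
  (trP : Pr -> A -> Pr -> Prop) (trE : Env -> A -> Env -> Prop) :
  (* (i) *)
  (forall (e : Env) (p q : Pr),
     param_bisim trP trE e p q -> ji_bisim trP trE e p q) /\
  (* (ii) *)
  (forall (a b : A) (xP yP : Pr) (xE yE : Env),
     a <> b ->
     is_ab trP a b yP -> is_ab_plus_a trP a b xP ->
     is_ab trE a b yE -> is_ab_plus_a trE a b xE ->
     (forall p q : Pr, param_bisim trP trE xE p q -> ji_bisim trP trE xE p q) /\
     ji_bisim trP trE xE yP xP /\ ~ param_bisim trP trE xE yP xP) /\
  (* (iii) *)
  (forall (e : Env) (p q : Pr),
     ji_bisim trP trE e p q -> ji_simeq trP trE e p q) /\
  (* (iv) *)
  (forall (a b : A) (xP yP : Pr) (xE yE : Env),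
     a <> b ->
     is_ab trP a b yP -> is_ab_plus_a trP a b xP ->
     is_ab trE a b yE -> is_ab_plus_a trE a b xE ->
     (forall p q : Pr, ji_bisim trP trE yE p q -> ji_simeq trP trE yE p q) /\
     ji_simeq trP trE yE yP xP /\ ~ ji_bisim trP trE yE yP xP).
Proof.
  split; [|split; [|split]].
  - apply part_i.
  - intros a b xP yP xE yE _ Hy Hx _ HxE. split; [apply part_i|split].
    + eapply ii_bisim; eauto.
    + eapply ii_not; eauto.
  - apply part_iii.
  - intros a b xP yP xE yE _ Hy Hx HyE _. split; [apply part_iii|split].
    + eapply iv_sim; eauto.
    + eapply iv_not; eauto.
Qed.
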